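(* Let $L=\{a^nb^m : n,m\in\mathbb{N},\ m\le n\}\cup\{a^nb^mc : n,m\in\mathbb{N}\}$ over the alphabet $\{a,b,c\}$. Then $L\in \mathrm{CH}_1$ and $L\notin \mathrm{CD}$, i.e. $L$ is recognised by some history-deterministic $1$-VASS under coverability acceptance but by no deterministic $k$-VASS (for any $k$) under coverability acceptance.
   Context: Fix a finite alphabet $\Sigma$. A $k$-dimensional vector addition system with states ($k$-VASS) is a tuple $(Q,q_0,F,\delta)$ where $Q$ is a finite set of states, $q_0\in Q$ is initial, $F\subseteq Q$ is the set of accepting states, and $\delta\subseteq Q\times\Sigma\times\mathbb{Z}^k\times Q$ is a finite set of transitions (no $\varepsilon$-transitions). A run on a word $w=a_1\cdots a_n$ is a sequence of transitions $(p_{i-1},a_i,d_i,p_i)$ with $p_0=q_0$ such that the counter vectors $v_0=\vec 0$, $v_i=v_{i-1}+d_i$ all lie in $\mathbb{N}^k$. Under coverability acceptance the run is accepting if $p_n\in F$. The language is the set of words having an accepting run. A VASS is deterministic if for every state $q$ and letter $a$ there is at most one transition $(q,a,d,q')$. A VASS is history-deterministic if there is a resolver, i.e. a function $r$ mapping each finite sequence of transitions and each letter $a$ to a transition labelled $a$, such that for every word $w$ in the language, the sequence of transitions obtained by successively applying $r$ to the letters of $w$ is a run on $w$ (counters stay nonnegative) and is accepting. $\mathrm{CD}_k$ (resp. $\mathrm{CH}_k$) is the class of languages recognised by deterministic (resp. history-deterministic) $k$-VASS under coverability acceptance, and $\mathrm{CD}=\bigcup_{k\ge1}\mathrm{CD}_k$.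 *)

(* Defs.v *)
From HB Require Import structures.
From mathcomp Require Import all_boot all_order all_algebra.
Set Implicit Arguments. Unset Strict Implicit. Unset Printing Implicit Defensive.
Import Order.TTheory GRing.Theory Num.Theory.
Local Open Scope ring_scope.

Inductive abc := La | Lb | Lc.
Definition abc_to (x : abc) : 'I_3 :=
  match x with La => inord 0 | Lb => inord 1 | Lc => inord 2 end.
Definition abc_of (i : 'I_3) : abc :=
  match val i with 0%N => La | 1%N => Lb | _ => Lc end.
Lemma abc_toK : cancel abc_to abc_of.
Proof. by case; rewrite /abc_of /= inordK. Qed.
HB.instance Definition _ := Finite.copy abc (can_type abc_toK).

(** k-VASS over a finite alphabet Sigma (no epsilon transitions).
    Counter vectors are elements of Z^k, represented as {ffun 'I_k -> int}. *)
Definition cvec (k : nat) := {ffun 'I_k -> int}.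

Record VASS (Sigma : finType) (k : nat) := {
  vstate : finType;
  vinit : vstate;
  vfinal : {pred vstate};
  vdelta : seq (vstate * Sigma * cvec k * vstate)
}.

Section VASSDefs.
Variables (Sigma : finType) (k : nat) (A : VASS Sigma k).

Definition trans := (vstate A * Sigma * cvec k * vstate A)%type.

Definition tsrc (t : trans) : vstate A := t.1.1.1.
Definition tlab (t : trans) : Sigma := t.1.1.2.
Definition tvec (t : trans) : cvec k := t.1.2.
Definition tdst (t : trans) : vstate A := t.2.

Definition vadd (v d : cvec k) : cvec k := [ffun i => v i + d i].
Definition vzero : cvec k := [ffun _ => 0].
Definition vnonneg (v : cvec k) : bool := [forall i, 0 <= v i].

Fixpoint run_end (p : vstate A) (v : cvec k) (ts : seq trans) (w : seq Sigma)
  : option (vstate A) :=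
  match ts, w with
  | [::], [::] => Some p
  | t :: ts', x :: w' =>
      if [&& t \in vdelta A, tsrc t == p, tlab t == x & vnonneg (vadd v (tvec t))]
      then run_end (tdst t) (vadd v (tvec t)) ts' w'
      else None
  | _, _ => None
  end.

Definition is_run (ts : seq trans) (w : seq Sigma) : Prop :=
  exists q, run_end (vinit A) vzero ts w = Some q.

(** ts is an accepting run (coverability acceptance). *)
Definition accepting_run (ts : seq trans) (w : seq Sigma) : Prop :=
  exists q, run_end (vinit A) vzero ts w = Some q /\ q \in @vfinal _ _ A.

Definition lang (w : seq Sigma) : Prop := exists ts, accepting_run ts w.

Definition deterministic : Prop :=
  forall t1 t2, t1 \in vdelta A -> t2 \in vdelta A ->
    tsrc t1 = tsrc t2 -> tlab t1 = tlab t2 -> t1 = t2.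

Fixpoint resolve_from (r : seq trans -> Sigma -> trans) (h : seq trans)
  (w : seq Sigma) : seq trans :=
  match w with
  | [::] => h
  | a :: w' => resolve_from r (rcons h (r h a)) w'
  end.

Definition resolver (r : seq trans -> Sigma -> trans) : Prop :=
  (forall h a, r h a \in vdelta A /\ tlab (r h a) = a) /\
  (forall w, lang w -> is_run (resolve_from r [::] w) w
                       /\ accepting_run (resolve_from r [::] w) w).

Definition history_deterministic : Prop := exists r, resolver r.

End VASSDefs.

Definition in_CD (Sigma : finType) (k : nat) (L : seq Sigma -> Prop) : Prop :=
  exists A : VASS Sigma k, deterministic A /\ forall w, lang A w <-> L w.

Definition in_CH (Sigma : finType) (k : nat) (L : seq Sigma -> Prop) : Prop :=
  exists A : VASS Sigma k, history_deterministic A /\ forall w, lang A w <-> L w.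

Definition in_CD_any (Sigma : finType) (L : seq Sigma -> Prop) : Prop :=
  exists k, (1 <= k)%N /\ in_CD k L.

Definition Lex (w : seq abc) : Prop :=
  (exists n m : nat, (m <= n)%N /\ w = nseq n La ++ nseq m Lb) \/
  (exists n m : nat, w = nseq n La ++ nseq m Lb ++ [:: Lc]).

(* Main.v *)
From HB Require Import structures.
Require Import Defs.
From mathcomp Require Import all_boot all_order all_algebra.
From mathcomp Require Import zify.
From Stdlib Require Import Classical ClassicalEpsilon.
Set Implicit Arguments. Unset Strict Implicit. Unset Printing Implicit Defensive.
Import Order.TTheory GRing.Theory Num.Theory.
Section Generic.
Variables (Sigma : finType) (k : nat) (A : VASS Sigma k).
Fixpoint rc (p : vstate A) (v : cvec k) (ts : seq (trans A)) (w : seq Sigma)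
  : option (vstate A * cvec k) :=
  match ts, w with
  | [::], [::] => Some (p, v)
  | t :: ts', x :: w' =>
      if [&& t \in vdelta A, tsrc t == p, tlab t == x & vnonneg (vadd v (tvec t))]
      then rc (tdst t) (vadd v (tvec t)) ts' w'
      else None
  | _, _ => None
  end.

Lemma run_end_rc p v ts w : run_end p v ts w = omap fst (rc p v ts w).
Proof. elim: ts w p v => [|t ts IH] [|x w] p v //=. by case: ifP. Qed.

Lemma rc_size p v ts w c : rc p v ts w = Some c -> size ts = size w.
Proof. elim: ts w p v => [|t ts IH] [|x w] p v //=. case: ifP => // _ /IH -> //. Qed.

Lemma rc_cat p v ts1 ts2 w1 w2 : size ts1 = size w1 ->
  rc p v (ts1 ++ ts2) (w1 ++ w2) = obind (fun c => rc c.1 c.2 ts2 w2) (rc p v ts1 w1).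
Proof.
elim: ts1 w1 p v => [|t ts IH] [|x w] p v //= [] hs.
by case: ifP => // _; apply: IH.
Qed.

Lemma rc_split p v ts w1 w2 c : rc p v ts (w1 ++ w2) = Some c ->
  exists ts1 ts2 c1, rc p v ts1 w1 = Some c1 /\ rc c1.1 c1.2 ts2 w2 = Some c
     /\ ts = ts1 ++ ts2.
Proof.
move=> h; have hs := rc_size h.
move: h; rewrite -(cat_take_drop (size w1) ts) rc_cat; last first.
  by rewrite size_takel // hs size_cat leq_addr.
case e: (rc p v _ w1) => [c1|] //= h.
by exists (take (size w1) ts), (drop (size w1) ts), c1; rewrite cat_take_drop.
Qed.

Lemma rc_det (hd : deterministic A) p v v' ts ts' w c c' :
  rc p v ts w = Some c -> rc p v' ts' w = Some c' -> c.1 = c'.1.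
Proof.
elim: w p v v' ts ts' => [|x w IH] p v v' [|t ts] [|t' ts'] /=; try discriminate.
- by move=> [<-] [<-].
- case: ifP => // /and4P [h1 /eqP h2 /eqP h3 _].
  case: ifP => // /and4P [h1' /eqP h2' /eqP h3' _].
  have et : t = t' by apply: hd => //; rewrite ?h2 ?h2' ?h3 ?h3'.
  subst t'; exact: IH.
Qed.
End Generic.
Definition isA (x : abc) := if x is La then true else false.
Definition isB (x : abc) := if x is Lb then true else false.
Definition isC (x : abc) := if x is Lc then true else false.

Lemma Lex_a i : Lex (nseq i La).
Proof. by left; exists i, 0; rewrite cats0. Qed.
Lemma Lex_ab n : Lex (nseq n La ++ nseq n Lb).
Proof. by left; exists n, n. Qed.
Lemma Lex_abc i j : Lex (nseq i La ++ nseq j Lb ++ [:: Lc]).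
Proof. by right; exists i, j. Qed.
Lemma Lex_not i j : (i < j)%N -> ~ Lex (nseq i La ++ nseq j Lb).
Proof.
move=> hij [[n [m [hmn e]]] | [n [m e]]].
- have := congr1 (count isA) e; have := congr1 (count isB) e.
  rewrite !count_cat !count_nseq /= => e1 e2. lia.
- have := congr1 (count isC) e.
  by rewrite !count_cat !count_nseq /=.
Qed.

Lemma lang_rc Sigma k (A : VASS Sigma k) w :
  lang A w -> exists ts c, rc (vinit A) (vzero k) ts w = Some c /\ c.1 \in @vfinal _ _ A.
Proof.
case=> ts [q []]; rewrite run_end_rc; case e: (rc _ _ _ _) => [c|] //= [<-] hq.
by exists ts, c.
Qed.

Lemma notCD k (A : VASS abc k) : deterministic A -> ~ (forall w, lang A w <-> Lex w).
Proof.
move=> hd hL.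
have ex i : exists q, exists ts c, rc (vinit A) (vzero k) ts (nseq i La) = Some c /\ c.1 = q.
  have [ts [c [h _]]] := lang_rc (proj2 (hL _) (Lex_a i)).
  by exists c.1, ts, c.
pose f i := proj1_sig (constructive_indefinite_description _ (ex i)).
have hf i : exists ts c, rc (vinit A) (vzero k) ts (nseq i La) = Some c /\ c.1 = f i.
  exact: (proj2_sig (constructive_indefinite_description _ (ex i))).
have [i [j [hij fij]]] : exists i j, (i < j)%N /\ f i = f j.
  apply: NNPP => H.
  pose g (x : 'I_(#|vstate A|.+1)) := f x.
  have : injective g.
    move=> x y e; apply/val_inj.
    case: (ltngtP x y) => // h; exfalso; apply: H.
      by exists x, y.
    by exists y, x.
  by move/leq_card; rewrite card_ord ltnn.
have [tsi [ci [hi ei]]] := hf i.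
have [tsj [cj [hj ej]]] := hf j.
have [ts1 [cc [h1 _]]] := lang_rc (proj2 (hL _) (Lex_abc i j)).
have [ts11 [ts12 [c1 [h11 [h12 _]]]]] := rc_split h1.
have [ts121 [ts122 [c2 [h121 _]]]] := rc_split h12.
have [ts2 [cc' [h2 hfin]]] := lang_rc (proj2 (hL _) (Lex_ab j)).
have [ts21 [ts22 [c3 [h21 [h22 _]]]]] := rc_split h2.
have e1 : c1.1 = c3.1.
  rewrite (rc_det hd h11 hi) (rc_det hd h21 hj) ei ej fij //.
have e2 : c2.1 = cc'.1.
  move: h22; rewrite -e1 => h22; exact: (rc_det hd h121 h22).
apply: (Lex_not hij); apply/hL.
exists (ts11 ++ ts121), c2.1; rewrite run_end_rc rc_cat ?(rc_size h11) //.
by rewrite h11 /= h121 /= e2.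
Qed.

Inductive st := SP | SQ | SR | SF.
Definition st_to (x : st) : 'I_4 :=
  match x with SP => inord 0 | SQ => inord 1 | SR => inord 2 | SF => inord 3 end.
Definition st_of (i : 'I_4) : st :=
  match val i with 0%N => SP | 1%N => SQ | 2%N => SR | _ => SF end.
Lemma st_toK : cancel st_to st_of.
Proof. by case; rewrite /st_of /= inordK. Qed.
HB.instance Definition _ := Finite.copy st (can_type st_toK).

Definition isR (s : st) := if s is SR then true else false.

Section Ex.
Local Open Scope ring_scope.
Definition cst (z : int) : cvec 1 := [ffun _ => z].
Definition T := (st * abc * cvec 1 * st)%type.
Definition tA : T := (SP, La, cst 1, SP).
Definition tB1 : T := (SP, Lb, cst (-1), SQ).
Definition tB1' : T := (SQ, Lb, cst (-1), SQ).
Definition tB0 : T := (SP, Lb, cst 0, SR).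
Definition tB0' : T := (SQ, Lb, cst 0, SR).
Definition tB0'' : T := (SR, Lb, cst 0, SR).
Definition tCP : T := (SP, Lc, cst 0, SF).
Definition tCQ : T := (SQ, Lc, cst 0, SF).
Definition tCR : T := (SR, Lc, cst 0, SF).
Definition deltaL : seq T := [:: tA; tB1; tB1'; tB0; tB0'; tB0''; tCP; tCQ; tCR].
Definition Aex : VASS abc 1 :=
  {| vstate := st; vinit := SP; vfinal := (fun s : st => ~~ isR s); vdelta := deltaL |}.

Definition choose (c : st * cvec 1) (x : abc) : T :=
  match x with
  | La => tA
  | Lb => match c.1 with
          | SP => if 0 < c.2 ord0 then tB1 else tB0
          | SQ => if 0 < c.2 ord0 then tB1' else tB0'
          | _ => tB0'' end
  | Lc => match c.1 with SQ => tCQ | SR => tCR | _ => tCP end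
  end.

Definition step (c : st * cvec 1) (t : T) : st * cvec 1 := (t.2, vadd c.2 t.1.2).
Definition conf (h : seq T) := foldl step (SP, vzero 1) h.
Definition res (h : seq (trans Aex)) (x : abc) : trans Aex := choose (conf h) x.
Fixpoint gen (c : st * cvec 1) (w : seq abc) : seq T :=
  match w with
  | [::] => [::]
  | x :: w' => choose c x :: gen (step c (choose c x)) w'
  end.

Lemma resolve_gen w h : resolve_from res h w = h ++ gen (conf h) w.
Proof.
elim: w h => [|x w IH] h /=; first by rewrite cats0.
by rewrite IH /conf foldl_rcons cat_rcons.
Qed.

Definition G s v w := @run_end abc 1 Aex s v (gen (s, v) w) w.

Lemma choose_mem c x : choose c x \in deltaL.
Proof.
by case: x; case: c => [[]] v /=; try case: ifP; rewrite /deltaL !inE eqxx ?orbT.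
Qed.
Lemma choose_lab c x : (choose c x).1.1.2 = x.
Proof. by case: x; case: c => [[]] v /=; try case: ifP. Qed.

Lemma G_cons s v x w : G s v (x :: w) =
  if ((choose (s, v) x).1.1.1 == s) && vnonneg (vadd v (choose (s, v) x).1.2)
  then G (choose (s, v) x).2 (vadd v (choose (s, v) x).1.2) w else None.
Proof.
rewrite /G /=.
have -> : (choose (s, v) x \in vdelta Aex) by exact: choose_mem.
by rewrite /tlab choose_lab eqxx.
Qed.

Lemma vadd_cst a b : vadd (cst a) (cst b) = cst (a + b).
Proof. by apply/ffunP => i; rewrite !ffunE. Qed.
Lemma vnonneg_cst a : vnonneg (cst a) = (0 <= a).
Proof. by apply/forallP/idP => [/(_ ord0)|h i]; rewrite ffunE. Qed.
Lemma cst0 a : cst a ord0 = a.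
Proof. by rewrite ffunE. Qed.

Lemma GA n c rest : 0 <= c ->
  G SP (cst c) (nseq n La ++ rest) = G SP (cst (c + n%:Z)) rest.
Proof.
elim: n c => [|n IH] c hc /=; first by rewrite addr0.
rewrite G_cons /= eqxx vadd_cst vnonneg_cst ifT; last by lia.
rewrite IH; last by lia.
by have -> : c + 1 + n%:Z = c + n.+1%:Z by lia.
Qed.

Lemma GB m s c rest : (s = SP \/ s = SQ) -> m%:Z <= c ->
  G s (cst c) (nseq m Lb ++ rest) = G (if m == 0%N then s else SQ) (cst (c - m%:Z)) rest.
Proof.
elim: m s c => [|m IH] s c hs hc /=; first by rewrite subr0.
have hc0 : 0 < c by lia.
rewrite G_cons.
have -> : choose (s, cst c) Lb = if s is SP then tB1 else tB1'.
  by case: hs => ->; rewrite /= cst0 hc0.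
case: hs => -> /=; rewrite eqxx vadd_cst vnonneg_cst ifT; try lia.
all: rewrite IH; [| by right | lia].
all: have -> : c - 1 - m%:Z = c - m.+1%:Z by lia.
all: by case: (m == 0%N).
Qed.

Lemma GB0 s rest : (s = SP \/ s = SQ) -> G s (cst 0) (Lb :: rest) = G SR (cst 0) rest.
Proof.
move=> hs; rewrite G_cons; have -> : choose (s, cst 0) Lb = if s is SP then tB0 else tB0'.
  by case: hs => ->; rewrite /= cst0.
by case: hs => -> /=; rewrite eqxx vadd_cst vnonneg_cst addr0.
Qed.

Lemma GR m rest : G SR (cst 0) (nseq m Lb ++ rest) = G SR (cst 0) rest.
Proof.
elim: m => [|m IH] //=.
by rewrite G_cons /= eqxx vadd_cst vnonneg_cst addr0 IH.
Qed.

Lemma G_nil s v : G s v [::] = Some s.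
Proof. by []. Qed.

Lemma G_c s c : s <> SF -> 0 <= c -> G s (cst c) [:: Lc] = Some SF.
Proof.
case: s => // _ hc; rewrite G_cons /=;
by rewrite eqxx vadd_cst vnonneg_cst addr0 hc.
Qed.

Lemma res_run w : Lex w ->
  exists q, G SP (cst 0) w = Some q /\ ~~ isR q.
Proof.
case=> [[n [m [hmn ->]]] | [n [m ->]]].
- rewrite -[nseq m Lb]cats0 GA // add0r GB //; last by left.
  by eexists; split; first reflexivity; case: (m == 0%N).
- rewrite GA // add0r.
  case: (leqP m n) => hmn.
    rewrite GB //; last by left.
    by rewrite G_c //; [exists SF | case: (m == 0%N) | lia].
  have -> : m = (n + (m - n).-1.+1)%N by lia.
  rewrite nseqD -catA GB //; last by left.
  rewrite subrr /= GB0; last by case: (n == 0%N); [left|right].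
  by rewrite GR G_c //; exists SF.
Qed.
End Ex.

Section Inv.
Local Open Scope ring_scope.
Definition Inv (s : st) (v : cvec 1) (u : seq abc) : Prop :=
  match s with
  | SP => exists n : nat, u = nseq n La /\ v ord0 = n%:Z
  | SQ => exists n m : nat, u = nseq n La ++ nseq m Lb /\ (m <= n)%N /\ v ord0 = n%:Z - m%:Z
  | SR => exists n m : nat, u = nseq n La ++ nseq m Lb
  | SF => exists n m : nat, u = nseq n La ++ nseq m Lb ++ [:: Lc]
  end.

Lemma rcons_nseq (x : abc) n : rcons (nseq n x) x = nseq n.+1 x.
Proof. by rewrite -cats1 -addn1 nseqD. Qed.

Lemma inv_step t s v u : t \in deltaL -> t.1.1.1 = s -> vnonneg (vadd v t.1.2) ->
  Inv s v u -> Inv t.2 (vadd v t.1.2) (rcons u t.1.1.2).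
Proof.
rewrite /deltaL !in_cons in_nil orbF.
move=> ht hs /forallP /(_ ord0); rewrite !ffunE => hn.
move: ht hs hn.
repeat (case/predU1P => [-> | ]); try move/eqP => ->.
all: move=> <- /=; rewrite ?ffunE => hn.
- by case=> n [-> e]; exists n.+1; rewrite rcons_nseq e; split => //; lia.
- case=> n [-> e]; exists n, 1%N; split; [by rewrite -cats1 | split; lia].
- case=> n [m [-> [hmn e]]]; exists n, m.+1; rewrite rcons_cat rcons_nseq; split => //; split; lia.
- case=> n [-> e]; exists n, 1%N; by rewrite -cats1.
- case=> n [m [-> _]]; exists n, m.+1; by rewrite rcons_cat rcons_nseq.
- case=> n [m ->]; exists n, m.+1; by rewrite rcons_cat rcons_nseq.
- case=> n [-> _]; exists n, 0%N; by rewrite /= cats1.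
- case=> n [m [-> _]]; exists n, m; by rewrite -cats1 -catA.
- case=> n [m ->]; exists n, m; by rewrite -cats1 -catA.
Qed.
End Inv.

Lemma inv_run ts w s v u q : Inv s v u -> @run_end abc 1 Aex s v ts w = Some q ->
  exists v', Inv q v' (u ++ w).
Proof.
elim: ts w s v u => [|t ts IH] [|x w] s v u //=.
- by move=> hI [<-]; exists v; rewrite cats0.
- case: ifP => // /and4P [h1 /eqP h2 /eqP h3 h4] hI hr.
  have hI' := inv_step h1 h2 h4 hI.
  rewrite /tlab in h3; rewrite h3 in hI'.
  have [v' hv] := IH _ _ _ _ hI' hr.
  by exists v'; rewrite cat_rcons in hv.
Qed.

Lemma langAex w : lang Aex w <-> Lex w.
Proof.
split.
- case=> ts [q [hr hq]].
  have h0 : Inv SP (vzero 1) [::] by exists 0%N; rewrite ffunE.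
  have [v' hv] := inv_run h0 hr.
  clear hr; move: hq hv; rewrite /= /in_mem /=.
  case: q => //= _.
  + by case=> n [-> _]; left; exists n, 0%N; rewrite cats0.
  + by case=> n [m [-> [hmn _]]]; left; exists n, m.
  + by case=> n [m ->]; right; exists n, m.
- move=> /res_run [q [hq hf]].
  exists (gen (SP, cst 0) w), q; split => //.
Qed.

Lemma CH1 : in_CH 1 Lex.
Proof.
exists Aex; split; last exact: langAex.
exists res; split.
  by move=> h a; split; [exact: choose_mem | exact: choose_lab].
move=> w /langAex /res_run [q [hq hf]].
have e : resolve_from res [::] w = gen (SP, cst 0) w by rewrite resolve_gen.
rewrite e; split; [exists q | exists q; split] => //.
Qed.

Theorem mainTheorem2 : in_CH 1 Lex /\ ~ in_CD_any Lex.
Proof.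
split; first exact: CH1.
by case=> k [_ [A [hd hL]]]; exact: (notCD hd hL).
Qed.
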